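(* For every integer $r\geq 2$, $$\sum_{M\geq1}h_r(M)z^M=\frac{z+z^2+\cdots+z^{r-1}}{1-z-z^2-\cdots-z^r}.$$
   Context: The perimeter of a nonempty partition $\lambda$ with largest part $\lambda_1$ and $\ell(\lambda)$ parts is $\lambda_1+\ell(\lambda)-1$. For $r\geq2$, $h_r(M)$ is the number of partitions with perimeter $M$ in which every part value occurs fewer than $r$ times. *)

(* Defs.v *)
From mathcomp Require Import all_boot all_order all_algebra.
Set Implicit Arguments. Unset Strict Implicit. Unset Printing Implicit Defensive.
Import GRing.Theory Num.Theory.

Definition is_partition (s : seq nat) : bool :=
  [&& s != [::], sorted geq s & all (fun x => 0 < x) s].

Definition perimeter (s : seq nat) : nat := head 0 s + size s - 1.

Definition mult_lt (r : nat) (s : seq nat) : bool :=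
  all (fun x => count_mem x s < r) s.

Definition hr_pred (r M : nat) (s : seq nat) : bool :=
  [&& is_partition s, perimeter s == M & mult_lt r s].

(* h_r(M): number of such partitions.  A partition of perimeter M has
   length <= M and all parts <= M, so it is enumerated (exactly once) as
   an n-tuple of elements of 'I_(M+1) with n <= M. *)
Definition h (r M : nat) : nat :=
  \sum_(n < M.+1) #|[set t : n.-tuple 'I_M.+1 | hr_pred r M (map val t)]|.

Definition Hcoef (r M : nat) : int := if M == 0 then 0%R else Posz (h r M).

Definition den_coef (r k : nat) : int :=
  if k == 0 then 1%R else if k <= r then (-1)%R else 0%R.

Definition num_coef (r k : nat) : int :=
  if (1 <= k) && (k <= r.-1) then 1%R else 0%R.

(* Main.v *)
Require Import Defs.
From mathcomp Require Import all_boot all_order all_algebra zify.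
Set Implicit Arguments. Unset Strict Implicit. Unset Printing Implicit Defensive.

Lemma count_bij (T1 T2 : eqType) (L1 : seq T1) (L2 : seq T2) (f : T2 -> T1) (P : pred T1) :
  uniq L1 -> uniq L2 -> {in L2 &, injective f} ->
  (forall x, x \in L2 -> (f x \in L1) && P (f x)) ->
  (forall y, y \in L1 -> P y -> exists2 x, x \in L2 & y = f x) ->
  count P L1 = size L2.
Proof.
move=> u1 u2 inj h1 h2.
rewrite -size_filter -(size_map f L2); apply: perm_size.
apply: uniq_perm; first exact: filter_uniq.
  by rewrite map_inj_in_uniq.
move=> y; rewrite mem_filter; apply/andP/mapP.
  by case=> Py yL; case: (h2 y yL Py) => x xL ->; exists x.
by case=> x xL ->; case/andP: (h1 x xL) => a b; split.
Qed.

Lemma sum_count (T : eqType) (L : seq T) (P : pred T) (f : T -> nat) k :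
  (forall s, s \in L -> P s -> f s < k) ->
  \sum_(j < k) count (fun s => P s && (f s == j)) L = count P L.
Proof.
elim: L => [|x L IH] H /=; first by rewrite big1.
rewrite big_split /= IH; last by move=> s sL; apply: H; rewrite inE sL orbT.
congr (_ + _); case Px: (P x) => /=; last by rewrite big1.
have fk : f x < k by apply: H; rewrite ?inE ?eqxx.
rewrite (bigD1 (Ordinal fk)) //= eqxx big1 // => j /negbTE.
by rewrite eq_sym -val_eqE /= => ->.
Qed.

Lemma card_tup M n (P : pred (seq nat)) (L : seq (seq nat)) : uniq L ->
  (forall s, (s \in L) = P s) -> (forall s, P s -> all (fun x => x <= M) s) ->
  #|[set t : n.-tuple 'I_M.+1 | P (map val t)]| = count (fun s => size s == n) L.
Proof.
move=> uL memL bd; rewrite cardE.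
symmetry; apply: (count_bij (f := fun t : n.-tuple 'I_M.+1 => map val (val t))) => //.
- exact: enum_uniq.
- move=> t1 t2 _ _ /(inj_map val_inj) E; exact: val_inj.
- move=> t; rewrite mem_enum inE => Pt; by rewrite memL Pt size_map size_tuple eqxx.
- move=> y; rewrite memL => Py /eqP sy.
  have E : size (map (@inord M) y) == n by rewrite size_map sy.
  exists (Tuple E).
    rewrite mem_enum inE /= -map_comp.
    suff -> : [seq (val \o (@inord M)) i | i <- y] = y by [].
    rewrite -[RHS]map_id; apply/eq_in_map => x xy /=; apply: inordK.
    by move/allP: (bd _ Py) => /(_ x xy).
  rewrite /= -map_comp.
  rewrite -[LHS]map_id; apply/eq_in_map => x xy /=; rewrite inordK //.
  by move/allP: (bd _ Py) => /(_ x xy).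
Qed.

Lemma h_size r M (L : seq (seq nat)) : uniq L -> (forall s, (s \in L) = hr_pred r M s) ->
  (forall s, hr_pred r M s -> all (fun x => x <= M) s && (size s <= M)) ->
  h r M = size L.
Proof.
move=> uL memL bd; rewrite /h.
rewrite (eq_bigr (fun n : 'I_M.+1 => count (fun s => true && (size s == n)) L)); last first.
  move=> n _; apply: card_tup => // s /bd /andP[] //.
rewrite sum_count ?count_predT // => s; rewrite memL => /bd /andP[_] => ? _; lia.
Qed.
Lemma geq_trans' : transitive geq.
Proof. by move=> a b c /= h1 h2; apply: leq_trans h2 h1. Qed.

Lemma sorted_max x t : sorted geq (x :: t) -> all (fun y => y <= x) (x :: t).
Proof. by move=> /= /(order_path_min geq_trans') H; rewrite /= leqnn. Qed.

Lemma map_part r s (g : nat -> nat) : is_partition s -> mult_lt r s ->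
  {homo g : a b / a >= b} -> {in s &, injective g} -> {in s, forall y, 0 < g y} ->
  is_partition (map g s) && mult_lt r (map g s).
Proof.
case/and3P=> ne so po ml ho inj pos; apply/andP; split.
  apply/and3P; split.
  - by case: s ne {so po ml inj pos}.
  - exact: homo_sorted so.
  - by rewrite all_map; apply/allP => y ys /=; apply: pos.
rewrite /mult_lt all_map; apply/allP => y ys /=.
rewrite count_map.
have -> : count (preim g (pred1 (g y))) s = count_mem y s.
  apply: eq_in_count => z zs /=; apply/eqP/eqP => [/inj|->] //; exact.
by move/allP: ml => /(_ y ys).
Qed.

Definition A_pred (s : seq nat) := (1 < head 0 s) && ((head 0 s).-1 \notin s).
Definition inc (s : seq nat) := map (fun y => if y == head 0 s then y.+1 else y) s.
Definition dec (s : seq nat) := map (fun y => if y == head 0 s then y.-1 else y) s.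

Lemma part_cons s : is_partition s -> exists x t, s = x :: t.
Proof. by case: s => [|x t] //; exists x, t. Qed.

Lemma part_pos s y : is_partition s -> y \in s -> 0 < y.
Proof. by case/and3P=> _ _ /allP; apply. Qed.

Lemma part_le s y : is_partition s -> y \in s -> y <= head 0 s.
Proof.
case/and3P=> ne so _; case: s ne so => [|x t] // _ /sorted_max /allP H /H //.
Qed.

Lemma inc_ok r n s : hr_pred r n s -> hr_pred r n.+1 (inc s) && A_pred (inc s).
Proof.
case/and3P=> pa /eqP pe ml.
have [x [t st]] := part_cons pa.
have xs : x \in s by rewrite st mem_head.
have hx : head 0 s = x by rewrite st.
have x0 := part_pos pa xs.
have le y : y \in s -> y <= x by move/(part_le pa); rewrite st.
have hi : head 0 (inc s) = x.+1 by rewrite /inc st /= eqxx.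
have /andP[pa' ml'] : is_partition (inc s) && mult_lt r (inc s).
  rewrite /inc hx; apply: map_part => //.
  - move=> a b /=; case: eqP; case: eqP => ? ? ?; lia.
  - move=> a b /le ha /le hb /=; case: eqP; case: eqP => ? ? ?; lia.
  - by move=> a /(part_pos pa) /=; case: eqP.
apply/andP; split.
  rewrite /hr_pred pa' ml' /perimeter hi /inc size_map -pe /perimeter st /=; apply/eqP; lia.
rewrite /A_pred hi /=; apply/andP; split; first lia.
apply/mapP => -[y ys]; rewrite hx; have := le _ ys; case: eqP => ? ? ?; lia.
Qed.

Lemma dec_inc s : is_partition s -> dec (inc s) = s.
Proof.
move=> pa; have [x [t st]] := part_cons pa.
have le y : y \in s -> y <= x by move/(part_le pa); rewrite st.
have hx : head 0 s = x by rewrite st.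
have hi : head 0 (inc s) = x.+1 by rewrite /inc st /= eqxx.
rewrite /dec hi /inc -map_comp -[RHS]map_id; apply/eq_in_map => y ys /=.
rewrite hx; have := le _ ys; case: (y =P x) => ? ?; case: eqP => ?; lia.
Qed.

Lemma dec_ok r n s : hr_pred r n s -> A_pred s -> hr_pred r n.-1 (dec s) && (inc (dec s) == s).
Proof.
case/and3P=> pa /eqP pe ml /andP[h1 h2].
have [x [t st]] := part_cons pa.
rewrite st /= in h1 h2.
have xs : x \in s by rewrite st mem_head.
have hx : head 0 s = x by rewrite st.
have le y : y \in s -> y <= x by move/(part_le pa); rewrite st.
have nx y : y \in s -> y != x.-1 by move=> ys; apply: contraNneq h2 => <-; rewrite -st.
have hi : head 0 (dec s) = x.-1 by rewrite /dec st /= eqxx.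
have /andP[pa' ml'] : is_partition (dec s) && mult_lt r (dec s).
  rewrite /dec hx; apply: map_part => //.
  - move=> a b /=; case: eqP; case: eqP => ? ? ?; lia.
  - move=> a b /nx ha /nx hb /=; move: ha hb; case: (a =P x); case: (b =P x) => ? ? ? ? ?; lia.
  - move=> a /(part_pos pa) /=; case: eqP => ? ?; lia.
apply/andP; split.
  rewrite /hr_pred pa' ml' /perimeter hi /dec size_map -pe /perimeter st /=; apply/eqP; lia.
apply/eqP; rewrite /inc hi /dec -map_comp -[RHS]map_id; apply/eq_in_map => y ys /=.
rewrite hx; have := nx _ ys; case: (y =P x) => ? ?; case: eqP => ?; lia.
Qed.

Lemma prefix_split x t : sorted geq (x :: t) ->
  exists m u, x :: t = nseq m.+1 x ++ u /\ all (fun y => y < x) u.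
Proof.
elim: t => [|y t IH] /=; first by move=> _; exists 0, [::].
case/andP=> yx pt; have [Eyx|ne] := eqVneq y x.
  subst y; have [m [u [E H]]] := IH pt; exists m.+1, u; split => //; by rewrite E.
exists 0, (y :: t); split => //.
have := sorted_max pt => /allP H; apply/allP => z zt.
have := H z zt; move: yx ne; rewrite /= => ? /eqP ? ?; lia.
Qed.

Lemma sorted_nseq_cat j v t : sorted geq t -> head 0 t <= v -> sorted geq (nseq j v ++ t).
Proof.
move=> st ht; elim: j => [|j IH] //=.
rewrite (path_sortedE geq_trans') IH andbT all_cat all_nseq /= leqnn orbT /=.
case: t st ht {IH} => [|y t] // /sorted_max /allP H hy; apply/allP => z /H /= zy; exact: leq_trans zy hy.
Qed.

Definition C2 j (s : seq nat) :=
  [&& 1 < head 0 s, (head 0 s).-1 \in s & count_mem (head 0 s) s == j].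

Lemma blk_ok r n j t : hr_pred r n t -> 0 < j < r ->
  hr_pred r (n + j).+1 (nseq j (head 0 t).+1 ++ t) && C2 j (nseq j (head 0 t).+1 ++ t).
Proof.
case/and3P=> pa /eqP pe ml /andP[j0 jr].
have [y [u tE]] := part_cons pa.
have ht : head 0 t = y by rewrite tE.
rewrite ht.
have y0 : 0 < y by apply: (part_pos pa); rewrite tE mem_head.
have le z : z \in t -> z <= y by move/(part_le pa); rewrite ht.
have hs : head 0 (nseq j y.+1 ++ t) = y.+1 by case: j j0 {jr}.
have vt : y.+1 \notin t by apply/negP => /le; lia.
have cv : count_mem y.+1 (nseq j y.+1 ++ t) = j.
  by rewrite count_cat count_nseq (count_memPn vt) /= eqxx; lia.
case/and3P: pa => ne so po.
apply/andP; split; last first.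
  rewrite /C2 hs cv eqxx andbT /=; apply/andP; split; first lia.
  by rewrite mem_cat tE mem_head orbT.
apply/and3P; split.
- apply/and3P; split.
  + by case: j j0 {jr hs cv}.
  + by apply: sorted_nseq_cat => //; rewrite ht.
  + by rewrite all_cat all_nseq po orbT.
- rewrite /perimeter hs size_cat size_nseq -pe /perimeter ht; apply/eqP.
  have : 0 < size t by rewrite tE.
  lia.
- apply/allP => z.
  have [->|nz] := eqVneq z y.+1; first by rewrite cv.
  rewrite mem_cat mem_nseq (negbTE nz) andbF /= => zt.
  rewrite count_cat count_nseq /= eq_sym (negbTE nz) /=.
  by move/allP: ml => /(_ z zt).
Qed.

Lemma blk_inv r n j s : hr_pred r n s -> C2 j s ->
  hr_pred r (n - j).-1 (drop j s) && (s == nseq j (head 0 (drop j s)).+1 ++ drop j s).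
Proof.
case/and3P=> pa /eqP pe ml /and3P[h1 h2 /eqP h3].
have [x [t st]] := part_cons pa.
have hx : head 0 s = x by rewrite st.
rewrite hx in h1 h2 h3.
case/and3P: (pa) => _ so po.
have [m [u [E H]]] : exists m u, x :: t = nseq m.+1 x ++ u /\ all (fun y => y < x) u by apply: prefix_split; rewrite -st.
rewrite -st in E.
have xu : x \notin u by apply/negP => /(allP H); rewrite ltnn.
have jm : j = m.+1 by rewrite -h3 E count_cat count_nseq (count_memPn xu) /= eqxx; lia.
have du : drop j s = u by rewrite E jm drop_size_cat // size_nseq.
rewrite du.
have x1u : x.-1 \in u.
  move: h2; rewrite E mem_cat mem_nseq => /orP[/andP[_ /eqP]|//]; lia.
have [z [w uE]] : exists z w, u = z :: w by case: (u) x1u => [|z w] //; exists z, w.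
have su : sorted geq u by rewrite -du; apply: drop_sorted.
have zx : z = x.-1.
  have := allP H z; rewrite uE mem_head => /(_ isT) zx.
  have su' : sorted geq (z :: w) by rewrite -uE.
  have := sorted_max su' => /allP; rewrite -uE => /(_ _ x1u) /=; lia.
have hu : head 0 u = x.-1 by rewrite uE.
apply/andP; split; last by rewrite hu jm; apply/eqP; rewrite E; congr (nseq _ _ ++ _); lia.
apply/and3P; split.
- apply/and3P; split; [by rewrite uE | exact: su |].
  by apply/allP => y yu; apply: (part_pos pa); rewrite E mem_cat yu orbT.
- move: pe; rewrite /perimeter hx E size_cat size_nseq uE /= zx jm => pe; apply/eqP; lia.
- apply/allP => y yu.
  have c1 : count (pred1 y) u <= count (pred1 y) s by rewrite E count_cat leq_addl.
  have c2 : count (pred1 y) s < r by move/allP: ml; apply; rewrite E mem_cat yu orbT.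
  exact: leq_ltn_trans c1 c2.
Qed.

Lemma one_case r n s : hr_pred r n s -> head 0 s <= 1 -> s = nseq n 1 /\ 0 < n < r.
Proof.
case/and3P=> pa /eqP pe ml h1.
have [x [t st]] := part_cons pa.
have e1 : all (pred1 1) s.
  apply/allP => y ys; have := part_pos pa ys; have := part_le pa ys; rewrite /= => ? ?; apply/eqP; lia.
have sE := all_pred1P _ _ e1.
have x1 : x = 1 by move/allP: e1 => /(_ x); rewrite st mem_head => /(_ isT) /eqP.
have ns : size s = n by rewrite -pe /perimeter st x1 /=; lia.
split; first by rewrite sE ns.
move/allP: ml => /(_ 1); rewrite st x1 mem_head -x1 -st => /(_ isT).
have n0 : 0 < n by rewrite -ns st.
rewrite sE count_nseq /= ns; lia.
Qed.

Lemma one_ok r n : 0 < n < r -> hr_pred r n (nseq n 1).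
Proof.
case/andP=> n0 nr; apply/and3P; split.
- apply/and3P; split.
  + by case: n n0 {nr}.
  + by elim: n {n0 nr} => [|[|n] IH] //=; rewrite leqnn.
  + by rewrite all_nseq orbT.
- by rewrite /perimeter size_nseq; case: n n0 {nr} => //= n _; rewrite add1n.
- by apply/allP => y; rewrite mem_nseq => /andP[_ /eqP ->]; rewrite count_nseq /= mul1n.
Qed.

Lemma part_bounds r M s : hr_pred r M s -> all (fun x => x <= M) s && (size s <= M).
Proof.
case/and3P=> pa /eqP pe _; have [x [t st]] := part_cons pa.
have x0 : 0 < x by apply: (part_pos pa); rewrite st mem_head.
apply/andP; split; last by rewrite -pe /perimeter st /=; lia.
apply/allP => y ys; have := part_le pa ys; rewrite -pe /perimeter st /= => ?; lia.
Qed.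

Fixpoint words (m k : nat) : seq (seq nat) :=
  if k is k'.+1 then [::] :: [seq x :: w | x <- iota 0 m, w <- words m k'] else [:: [::]].

Lemma words_mem m k w : size w <= k -> all (fun x => x < m) w -> w \in words m k.
Proof.
elim: k w => [|k IH] [|x w] //; try by rewrite inE eqxx.
rewrite /= ltnS => sw /andP[xm aw]; rewrite inE; apply/orP; right.
apply: (allpairs_f (fun x w => x :: w)); first by rewrite mem_iota.
exact: IH.
Qed.

Definition Lv r n := undup (filter (hr_pred r n) (words n.+1 n)).

Lemma Lv_mem r n s : (s \in Lv r n) = hr_pred r n s.
Proof.
rewrite mem_undup mem_filter; apply/andP/idP => [[]//|H]; split => //.
have /andP[a b] := part_bounds H; apply: words_mem => //.
Qed.

Lemma Lv_uniq r n : uniq (Lv r n).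
Proof. exact: undup_uniq. Qed.

Lemma h_Lv r n : h r n = size (Lv r n).
Proof. apply: h_size; [exact: Lv_uniq | exact: Lv_mem | exact: part_bounds]. Qed.

Lemma per_pos r n s : hr_pred r n s -> 0 < n.
Proof.
case/and3P=> pa /eqP <- _; have [x [t st]] := part_cons pa.
have : 0 < x by apply: (part_pos pa); rewrite st mem_head.
rewrite st.
rewrite /perimeter /=; lia.
Qed.

Lemma count_split (T : Type) (a b : pred T) L :
  count a L = count (fun x => a x && b x) L + count (fun x => a x && ~~ b x) L.
Proof. elim: L => //= x L ->; case: (a x); case: (b x) => /=; lia. Qed.

Lemma recur r n : 1 < r ->
  size (Lv r n) = size (Lv r n.-1) + \sum_(j < r.-1) size (Lv r (n - j.+1).-1) + (0 < n < r).
Proof.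
move=> r1.
rewrite -(count_predT (Lv r n)) (count_split _ (fun s => 1 < head 0 s)) /=.
have E3 : count (fun s => true && ~~ (1 < head 0 s)) (Lv r n) = (0 < n < r).
  have -> : nat_of_bool (0 < n < r) = size (if 0 < n < r then [:: nseq n 1] else [::]) by case: ifP.
  apply: (count_bij (f := id)) => //; first exact: Lv_uniq.
  - by case: ifP.
  - move=> x; case: ifP => // H; rewrite inE => /eqP -> /=.
    by rewrite Lv_mem one_ok //; case: n H => //.
  - move=> y; rewrite Lv_mem /= -leqNgt => yv /(one_case yv) [-> H].
    by exists (nseq n 1); rewrite ?H ?inE.
rewrite E3; congr (_ + _).
rewrite (count_split _ (fun s => (head 0 s).-1 \notin s)) /=.
have E1 : count (fun s => (1 < head 0 s) && ((head 0 s).-1 \notin s)) (Lv r n) = size (Lv r n.-1).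
  apply: (count_bij (f := inc)); try exact: Lv_uniq.
  - move=> x y; rewrite !Lv_mem => /and3P[px _ _] /and3P[py _ _] E.
    by rewrite -(dec_inc px) E dec_inc.
  - move=> x; rewrite Lv_mem => hx; have n1 := per_pos hx.
    have := inc_ok hx; have -> : n.-1.+1 = n by lia.
    by rewrite Lv_mem.
  - move=> y; rewrite Lv_mem => hy Ay; have := dec_ok hy Ay => /andP[d /eqP e].
    by exists (dec y); rewrite ?Lv_mem.
rewrite E1; congr (_ + _).
have cmr s : s \in Lv r n -> true -> count_mem (head 0 s) s < r.
  rewrite Lv_mem => /and3P[pa _ ml] _; move/allP: ml; apply.
  by have [x [t ->]] := part_cons pa; rewrite mem_head.
rewrite -(@sum_count _ (Lv r n) (fun s => (1 < head 0 s) && ~~ ((head 0 s).-1 \notin s)) (fun s => count_mem (head 0 s) s) r); last first.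
  by move=> s /cmr H _; apply: H.
case: r r1 {cmr E1 E3} => [|r] // r1.
rewrite big_ord_recl /=.
have -> : count (fun s => ((1 < head 0 s) && ~~ ((head 0 s).-1 \notin s)) && (count_mem (head 0 s) s == 0)) (Lv r.+1 n) = size ([::] : seq (seq nat)).
  apply: (count_bij (f := id)) => //; first exact: Lv_uniq.
  move=> y; rewrite Lv_mem => /and3P[pa _ _] /andP[_ /eqP c0].
  have [x [t st]] := part_cons pa; move: c0; rewrite st /= eqxx; lia.
rewrite add0n; apply: eq_bigr => j _.
apply: (count_bij (f := fun t => nseq j.+1 (head 0 t).+1 ++ t)); try exact: Lv_uniq.
- move=> x y _ _ E; have := congr1 (drop j.+1) E.
  by rewrite !drop_size_cat ?size_nseq.
- move=> x; rewrite Lv_mem => hx; have n1 := per_pos hx.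
  have /andP[] := @blk_ok r.+1 _ j.+1 _ hx (ltn_ord j).
  have -> : ((n - j.+1).-1 + j.+1).+1 = n by lia.
  rewrite Lv_mem => -> /and3P[-> -> ->] //.
- move=> y; rewrite Lv_mem => hy /andP[/andP[h1 h2] h3].
  have c2 : C2 j.+1 y by rewrite /C2 h1 h3 -(negbK (_ \in y)) h2.
  have /andP[hd /eqP e] := @blk_inv r.+1 n j.+1 y hy c2.
  by exists (drop j.+1 y); rewrite ?Lv_mem.
Qed.

Lemma T0 r : size (Lv r 0) = 0.
Proof.
by [].
Qed.

Lemma widen_sum (g : nat -> nat) m r : (forall k, m <= k -> g k = 0) ->
  \sum_(k < m.+1) (if k < r then g k else 0) = \sum_(k < r) g k.
Proof.
move=> g0.
have E1 : \sum_(k < m.+1) (if k < r then g k else 0) = \sum_(0 <= k < m.+1 + r) (if k < r then g k else 0).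
  rewrite (big_cat_nat (leq0n m.+1)) ?leq_addr //= big_mkord.
  rewrite [X in _ = _ + X]big1_seq ?addn0 // => k /andP[_]; rewrite mem_index_iota => /andP[mk _].
  by rewrite g0 ?if_same //; apply: ltnW.
have E2 : \sum_(k < r) g k = \sum_(0 <= k < m.+1 + r) (if k < r then g k else 0).
  rewrite (big_cat_nat (leq0n r)) ?leq_addl //= big_mkord.
  rewrite [X in _ = _ + X]big1_seq ?addn0 //; last first.
    by move=> k /andP[_]; rewrite mem_index_iota => /andP[rk _]; rewrite ltnNge rk.
  by apply: eq_bigr => k _; rewrite ltn_ord.
by rewrite E1 E2.
Qed.

Import GRing.Theory Num.Theory.
Local Open Scope ring_scope.

Theorem mainTheorem12 (r : nat) (hr : (2 <= r)%N) (M : nat) :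
  \sum_(k < M.+1) den_coef r k * Hcoef r (M - k) = num_coef r M.
Proof.
pose T n := size (Lv r n).
have HT n : Hcoef r n = (T n)%:Z.
  by rewrite /Hcoef /T; case: n => [|n] //=; rewrite ?T0 // h_Lv.
case: M => [|m].
  by rewrite big_ord_recl big_ord0 HT /T T0.
rewrite (eq_bigr (fun k : 'I_m.+2 => (if nat_of_ord k == 0%N then T m.+1 else 0%N)%:R -
    (if (1 <= k <= r)%N then T (m.+1 - k)%N else 0%N)%:R)); last first.
  move=> k _; rewrite HT /den_coef; case: (nat_of_ord k =P 0%N) => [->|k0] /=.
    by rewrite subn0 mul1r subr0 natz.
  have -> : (0 < k)%N by rewrite lt0n; apply/eqP.
  by case: ifP => _ /=; rewrite ?mulN1r ?mul0r ?sub0r ?subr0 ?natz.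
rewrite sumrB -!natr_sum !natz.
have -> : (\sum_(k < m.+2) (if nat_of_ord k == 0%N then T m.+1 else 0%N))%N = T m.+1.
  by rewrite big_ord_recl /= big1 ?addn0.
have -> : (\sum_(k < m.+2) (if (1 <= k <= r)%N then T (m.+1 - k)%N else 0%N))%N =
          (\sum_(k < r) T (m - k)%N)%N.
  rewrite big_ord_recl /= add0n -(widen_sum (g := fun k => T (m - k)%N) (m := m) r).
    by apply: eq_bigr => k _ /=; rewrite subSS.
  by move=> k mk /=; have -> : (m - k = 0)%N by apply/eqP; rewrite subn_eq0.
have rec := @recur r m.+1 hr.
have -> : T m.+1 = (\sum_(k < r) T (m - k)%N + (0 < m.+1 < r))%N.
  rewrite /T rec /=; clear HT T rec; case: r hr => [|r'] // _.
  rewrite big_ord_recl subn0 /= ; congr (_ + _ + _)%N.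
  by apply: eq_bigr => j _; rewrite /bump /= add1n subSS subnS.
rewrite PoszD addrAC subrr add0r /num_coef.
have -> : (0 < m.+1 < r)%N = (1 <= m.+1 <= r.-1)%N by clear HT T rec; case: r hr.
by case: ifP.
Qed.
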